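(* Let $(X,d)$ be a compact metric space and $f:X\to X$ continuous. For each $\delta>0$ let $\mathcal D(\delta)=\{D_{i,j}:1\le i\le K,\ 0\le j\le m_i-1\}$ be a family of pairwise disjoint subsets of $CR(f)$ (with $K,m_i$ depending on $\delta$) satisfying: (D1) $CR(f)=\bigsqcup_{i,j}D_{i,j}$ and each $D_{i,j}$ is clopen in $CR(f)$; (D2) setting $D_{i,m_i}=D_{i,0}$, $f(D_{i,j})=D_{i,j+1}$ for all $i,j$; (D3) for any $x,y\in D_{i,j}$ there is $N>0$ such that for every integer $n\ge N$ there is a $\delta$-chain $(x_\eta)_{\eta=0}^k$ of $f$ in $CR(f)$ with $x_0=x$, $x_k=y$ and $k=m_in$. Then for any $x,y\in CR(f)$, $x\sim y$ if and only if for every $\delta>0$, $x$ and $y$ belong to the same member of $\mathcal D(\delta)$.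
   Context: For $\delta>0$, a finite sequence $(x_i)_{i=0}^k$ ($k\ge1$) is a $\delta$-chain of $f$ if $d(f(x_i),x_{i+1})\le\delta$ for $0\le i\le k-1$; it is a $\delta$-cycle if moreover $x_0=x_k$. $CR(f)$ is the set of points $x$ such that for every $\delta>0$ there is a $\delta$-cycle starting and ending at $x$. For $x,y\in CR(f)$, $x\sim y$ iff for every $\delta>0$ there are integers $m>0$, $N>0$ such that for every integer $n\ge N$ there are $\delta$-chains $(x_i)_{i=0}^{mn},(y_i)_{i=0}^{mn}$ of $f$ consisting of points of $CR(f)$ with $x_0=y_{mn}=x$ and $x_{mn}=y_0=y$. (Families satisfying (D1)–(D3) exist for every $\delta>0$.) *)

(* Defs.v *)
From Stdlib Require Import Reals List.
Open Scope R_scope.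

Record MetricSpace := {
  pt :> Type;
  dist : pt -> pt -> R;
  dist_nonneg : forall x y, 0 <= dist x y;
  dist_eq0 : forall x y, dist x y = 0 <-> x = y;
  dist_sym : forall x y, dist x y = dist y x;
  dist_tri : forall x y z, dist x z <= dist x y + dist y z
}.

Section Defs.
Variable X : MetricSpace.
Local Notation d := (dist X).

Definition is_open (U : X -> Prop) : Prop :=
  forall x, U x -> exists eps, 0 < eps /\ forall y, d x y < eps -> U y.

Definition compact_space : Prop :=
  forall (I : Type) (U : I -> X -> Prop),
    (forall i, is_open (U i)) -> (forall x, exists i, U i x) ->
    exists l : list I, forall x, exists i, In i l /\ U i x.

Definition continuous (f : X -> X) : Prop :=
  forall x eps, 0 < eps -> exists eta, 0 < eta /\
    forall y, d x y < eta -> d (f x) (f y) < eps.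

Definition is_chain (f : X -> X) (delta : R) (c : nat -> X) (k : nat) : Prop :=
  forall i, (i < k)%nat -> d (f (c i)) (c (S i)) <= delta.

Definition CR (f : X -> X) (x : X) : Prop :=
  forall delta, 0 < delta ->
    exists (c : nat -> X) (k : nat), (1 <= k)%nat /\ is_chain f delta c k /\
      c O = x /\ c k = x.

Definition CR_chain (f : X -> X) (delta : R) (c : nat -> X) (k : nat) : Prop :=
  is_chain f delta c k /\ forall i, (i <= k)%nat -> CR f (c i).

Definition chain_sim (f : X -> X) (x y : X) : Prop :=
  forall delta, 0 < delta ->
    exists m N : nat, (0 < m)%nat /\ (0 < N)%nat /\
      forall n, (N <= n)%nat ->
        exists xs ys : nat -> X,
          CR_chain f delta xs (m * n) /\ CR_chain f delta ys (m * n) /\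
          xs O = x /\ ys (m * n)%nat = x /\ xs (m * n)%nat = y /\ ys O = y.

Definition rel_open (f : X -> X) (D : X -> Prop) : Prop :=
  forall x, D x -> exists eps, 0 < eps /\
    forall y, CR f y -> d x y < eps -> D y.

Definition rel_closed (f : X -> X) (D : X -> Prop) : Prop :=
  forall x, CR f x ->
    (forall eps, 0 < eps -> exists y, D y /\ d x y < eps) -> D x.

(* A family D = {D_{i,j} : 0 <= i < K, 0 <= j < m_i} (indices i shifted
   to start at 0) satisfying (D1)-(D3) for the given delta. *)
Definition good_family (f : X -> X) (delta : R) (K : nat) (m : nat -> nat)
    (D : nat -> nat -> X -> Prop) : Prop :=
  (forall i, (i < K)%nat -> (0 < m i)%nat) /\
  (forall i j x, (i < K)%nat -> (j < m i)%nat -> D i j x -> CR f x) /\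
  (forall i j i' j' x, (i < K)%nat -> (j < m i)%nat ->
     (i' < K)%nat -> (j' < m i')%nat -> (i, j) <> (i', j') ->
     D i j x -> D i' j' x -> False) /\
  (forall x, CR f x -> exists i j, (i < K)%nat /\ (j < m i)%nat /\ D i j x) /\
  (forall i j, (i < K)%nat -> (j < m i)%nat ->
     rel_open f (D i j) /\ rel_closed f (D i j)) /\
  (* (D2) f(D_{i,j}) = D_{i,j+1}, with D_{i,m_i} = D_{i,0} *)
  (forall i j, (i < K)%nat -> (j < m i)%nat ->
     forall z, D i (Nat.modulo (S j) (m i)) z <-> exists w, D i j w /\ f w = z) /\
  (forall i j x y, (i < K)%nat -> (j < m i)%nat -> D i j x -> D i j y ->
     exists N : nat, (0 < N)%nat /\ forall n, (N <= n)%nat ->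
       exists c : nat -> X, CR_chain f delta c (m i * n) /\
         c O = x /\ c (m i * n)%nat = y).

End Defs.

(* Main.v *)
Require Import Defs.
From Stdlib Require Import Reals List Lra Lia Classical.
Open Scope R_scope.

Lemma CR_closed (X : MetricSpace) (f : X -> X) (fcont : continuous X f) (z : X) :
  (forall eps, 0 < eps -> exists v, CR X f v /\ Defs.dist X z v < eps) -> CR X f z.
Proof.
  intros Hz delta Hd.
  destruct (fcont z (delta/3)) as [eta [Heta Hc]]; [lra|].
  destruct (Hz (Rmin eta (delta/3))) as [v [Hv Hzv]]; [apply Rmin_pos; lra|].
  assert (H1 : Defs.dist X z v < eta) by (pose proof (Rmin_l eta (delta/3)); lra).
  assert (H2 : Defs.dist X z v < delta/3) by (pose proof (Rmin_r eta (delta/3)); lra).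
  pose proof (Hc v H1) as Hfv.
  destruct (Hv (delta/3)) as [c [k [Hk [Hch [Hc0 Hck]]]]]; [lra|].
  exists (fun i => if Nat.eqb i 0 then z else if Nat.eqb i k then z else c i), k.
  split; [lia|]. split.
  - intros i Hi. cbv beta. replace (Nat.eqb (S i) 0) with false by reflexivity.
    destruct (Nat.eqb_spec i 0) as [Hi0|Hi0]; destruct (Nat.eqb_spec (S i) k) as [Hik|Hik]; cbv iota.
    + subst i. pose proof (Hch 0%nat Hi). rewrite Hc0 in H. rewrite Hik, Hck in H.
      pose proof (Defs.dist_tri X (f z) (f v) z). pose proof (Defs.dist_tri X (f v) v z).
      rewrite (Defs.dist_sym X v z) in H3. lra.
    + subst i. pose proof (Hch 0%nat Hi). rewrite Hc0 in H.
      pose proof (Defs.dist_tri X (f z) (f v) (c 1%nat)). lra.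
    + destruct (Nat.eqb_spec i k); [lia|]. cbv iota.
      pose proof (Hch i Hi). rewrite Hik, Hck in H.
      pose proof (Defs.dist_tri X (f (c i)) v z). rewrite (Defs.dist_sym X v z) in H0. lra.
    + destruct (Nat.eqb_spec i k); [lia|]. cbv iota. pose proof (Hch i Hi). lra.
  - split; [reflexivity|].
    destruct (Nat.eqb_spec k 0); [lia|]. rewrite Nat.eqb_refl. reflexivity.
Qed.

Lemma gap (X : MetricSpace) (f : X -> X) (Xcpt : compact_space X) (fcont : continuous X f)
  delta K m D (HD : good_family X f delta K m D) :
  exists eps, 0 < eps /\ forall v w, CR X f v -> CR X f w -> Defs.dist X v w < eps ->
    exists i j, (i < K)%nat /\ (j < m i)%nat /\ D i j v /\ D i j w.
Proof.
  destruct HD as (Hm & Hsub & Hdisj & Hcov & Hclo & HD2 & HD3).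
  set (good := fun z r => forall v w, CR X f v -> CR X f w -> Defs.dist X z v < r ->
        Defs.dist X z w < r -> exists i j, (i < K)%nat /\ (j < m i)%nat /\ D i j v /\ D i j w).
  assert (Hg : forall z, exists r, 0 < r /\ good z r).
  { intro z. destruct (classic (CR X f z)) as [Hz|Hz].
    - destruct (Hcov z Hz) as [i [j [Hi [Hj Dz]]]].
      destruct (Hclo i j Hi Hj) as [Ho _].
      destruct (Ho z Dz) as [e [He Hb]]. exists e. split; [exact He|].
      intros v w Hv Hw Hzv Hzw. exists i, j. repeat split; auto.
    - assert (~ forall eps, 0 < eps -> exists v, CR X f v /\ Defs.dist X z v < eps) as Hn
        by (intro; apply Hz; apply CR_closed; auto).
      apply not_all_ex_not in Hn. destruct Hn as [e He].
      apply imply_to_and in He. destruct He as [He1 He2].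
      exists e. split; [exact He1|]. intros v w Hv Hw Hzv Hzw. exfalso. apply He2.
      exists v. auto. }
  set (I := {p : X * R | 0 < snd p /\ good (fst p) (snd p)}).
  set (U := fun (p : I) (w : X) => Defs.dist X (fst (proj1_sig p)) w < snd (proj1_sig p) / 2).
  destruct (Xcpt I U) as [l Hl].
  - intros p w Hw. exists (snd (proj1_sig p) / 2 - Defs.dist X (fst (proj1_sig p)) w).
    unfold U in *. split; [lra|]. intros y Hy.
    pose proof (Defs.dist_tri X (fst (proj1_sig p)) w y). lra.
  - intro w. destruct (Hg w) as [r [Hr Hgr]].
    exists (exist _ (w, r) (conj Hr Hgr)). unfold U; simpl.
    rewrite (proj2 (Defs.dist_eq0 X w w) eq_refl). lra.
  - set (eps := fold_right (fun (p : I) acc => Rmin (snd (proj1_sig p) / 2) acc) 1 l).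
    assert (Hpos : 0 < eps /\ forall p, In p l -> eps <= snd (proj1_sig p) / 2).
    { unfold eps. clear Hl. induction l as [|p l IH]; simpl.
      - split; [lra|]. intros p [].
      - destruct IH as [IH1 IH2].
        destruct (proj2_sig p) as [Hp _].
        split; [apply Rmin_pos; lra|].
        intros q [Hq|Hq].
        + subst q. apply Rmin_l.
        + eapply Rle_trans; [apply Rmin_r|]. auto. }
    destruct Hpos as [Hp1 Hp2].
    exists eps. split; [exact Hp1|].
    intros v w Hv Hw Hvw.
    destruct (Hl v) as [p [Hpl Hpv]]. unfold U in Hpv.
    pose proof (Hp2 p Hpl).
    destruct (proj2_sig p) as [Hr Hgood].
    apply (Hgood v w Hv Hw).
    + lra.
    + pose proof (Defs.dist_tri X (fst (proj1_sig p)) v w). lra.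
Qed.

Lemma follow (X : MetricSpace) (f : X -> X) delta K m D (HD : good_family X f delta K m D)
  eps (Hgap : forall v w, CR X f v -> CR X f w -> Defs.dist X v w < eps ->
    exists i j, (i < K)%nat /\ (j < m i)%nat /\ D i j v /\ D i j w)
  d' (Hd' : d' < eps) c L (Hc : CR_chain X f d' c L) i j0 (Hi : (i < K)%nat)
  (Hj0 : (j0 < m i)%nat) (H0 : D i j0 (c O)) :
  forall k, (k <= L)%nat -> D i (Nat.modulo (j0 + k) (m i)) (c k).
Proof.
  destruct HD as (Hm & Hsub & Hdisj & Hcov & Hclo & HD2 & HD3).
  destruct Hc as [Hch HcCR].
  pose proof (Hm i Hi) as Hmi.
  induction k as [|k IH]; intros Hk.
  - rewrite Nat.add_0_r, Nat.mod_small; auto.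
  - assert (Hjk : (Nat.modulo (j0 + k) (m i) < m i)%nat) by (apply Nat.mod_upper_bound; lia).
    specialize (IH ltac:(lia)).
    assert (Hf : D i (Nat.modulo (S (Nat.modulo (j0 + k) (m i))) (m i)) (f (c k))).
    { apply (proj2 (HD2 i _ Hi Hjk (f (c k)))). exists (c k); auto. }
    assert (Hidx : Nat.modulo (S (Nat.modulo (j0 + k) (m i))) (m i) = Nat.modulo (j0 + S k) (m i)).
    { replace (S (Nat.modulo (j0 + k) (m i))) with (Nat.modulo (j0 + k) (m i) + 1)%nat by lia.
      rewrite Nat.add_mod_idemp_l by lia. f_equal. lia. }
    rewrite Hidx in Hf.
    assert (Hlt : (Nat.modulo (j0 + S k) (m i) < m i)%nat) by (apply Nat.mod_upper_bound; lia).
    assert (HfCR : CR X f (f (c k))) by (eapply Hsub; eauto).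
    destruct (Hgap (f (c k)) (c (S k)) HfCR (HcCR (S k) Hk)) as [i' [j' [Hi' [Hj' [D1 D2]]]]].
    { pose proof (Hch k ltac:(lia)). lra. }
    destruct (classic ((i, Nat.modulo (j0 + S k) (m i)) = (i', j'))) as [Heq|Hne].
    + injection Heq as E1 E2. subst i' j'. exact D2.
    + exfalso. eapply Hdisj; [exact Hi|exact Hlt|exact Hi'|exact Hj'|exact Hne|exact Hf|exact D1].
Qed.

Theorem lemma3p2 (X : MetricSpace) (f : X -> X)
  (Xcpt : compact_space X) (fcont : continuous X f)
  (K : R -> nat) (m : R -> nat -> nat) (D : R -> nat -> nat -> X -> Prop)
  (HD : forall delta, 0 < delta -> good_family X f delta (K delta) (m delta) (D delta))
  (x y : X) (Hx : CR X f x) (Hy : CR X f y) :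
  chain_sim X f x y <->
  (forall delta, 0 < delta ->
     exists i j, (i < K delta)%nat /\ (j < m delta i)%nat /\
       D delta i j x /\ D delta i j y).
Proof.
  split.
  - intros Hsim delta Hd.
    pose proof (HD delta Hd) as HD'.
    destruct (gap X f Xcpt fcont _ _ _ _ HD') as [eps [He Hgap]].
    pose proof (follow X f _ _ _ _ HD' eps Hgap (eps/2) ltac:(lra)) as Fol.
    destruct HD' as (Hm & Hsub & Hdisj & Hcov & Hclo & HD2 & HD3).
    destruct (Hsim (eps/2)) as [m' [N [Hm' [HN Hch]]]]; [lra|].
    destruct (Hcov x Hx) as [i [j [Hi [Hj Dx]]]].
    pose proof (Hm i Hi) as Hmi.
    assert (Py : forall n, (N <= n)%nat -> D delta i (Nat.modulo (j + m' * n) (m delta i)) y).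
    { intros n Hn. destruct (Hch n Hn) as [xs [ys [Cx [Cy [E1 [E2 [E3 E4]]]]]]].
      rewrite <- E3. apply (Fol xs _ Cx i j Hi Hj); [rewrite E1; exact Dx| lia]. }
    set (t := Nat.modulo (j + m' * N) (m delta i)).
    assert (Ht : (t < m delta i)%nat) by (apply Nat.mod_upper_bound; lia).
    assert (Ht2 : (Nat.modulo (j + m' * (N + N)) (m delta i) < m delta i)%nat)
      by (apply Nat.mod_upper_bound; lia).
    assert (Eq1 : t = Nat.modulo (j + m' * (N + N)) (m delta i)).
    { destruct (Nat.eq_dec t (Nat.modulo (j + m' * (N + N)) (m delta i))) as [e|ne]; [exact e|].
      exfalso. eapply (Hdisj i t i _ y Hi Ht Hi Ht2); [congruence | apply Py; lia | apply Py; lia]. }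
    destruct (Hch N ltac:(lia)) as [xs [ys [Cx [Cy [E1 [E2 [E3 E4]]]]]]].
    assert (Dxt : D delta i (Nat.modulo (t + m' * N) (m delta i)) x).
    { rewrite <- E2. apply (Fol ys _ Cy i t Hi Ht); [rewrite E4; apply Py; lia | lia]. }
    assert (Eq2 : Nat.modulo (t + m' * N) (m delta i) = t).
    { unfold t at 1. rewrite Nat.add_mod_idemp_l by lia. rewrite Eq1. f_equal. lia. }
    rewrite Eq2 in Dxt.
    assert (Eq3 : t = j).
    { destruct (Nat.eq_dec t j) as [e|ne]; [exact e|].
      exfalso. eapply (Hdisj i t i j x Hi Ht Hi Hj); [congruence | exact Dxt | exact Dx]. }
    exists i, j. repeat split; auto. rewrite <- Eq3. apply Py; lia.
  - intros H delta Hd.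
    destruct (H delta Hd) as [i [j [Hi [Hj [Dx Dy]]]]].
    destruct (HD delta Hd) as (Hm & Hsub & Hdisj & Hcov & Hclo & HD2 & HD3).
    destruct (HD3 i j x y Hi Hj Dx Dy) as [N1 [HN1 C1]].
    destruct (HD3 i j y x Hi Hj Dy Dx) as [N2 [HN2 C2]].
    exists (m delta i), (Nat.max N1 N2).
    split; [apply Hm; exact Hi|]. split; [lia|].
    intros n Hn.
    destruct (C1 n ltac:(lia)) as [c1 [Hc1 [A1 B1]]].
    destruct (C2 n ltac:(lia)) as [c2 [Hc2 [A2 B2]]].
    exists c1, c2. split; [exact Hc1|]. split; [exact Hc2|]. auto.
Qed.
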